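(* Let $A$ be a unital semi-simple commutative Banach algebra, $U$ an automorphism of $A$, and $w \in A$. Let $T = wU$ and let $\check{T}$ be the associated weighted composition operator on $\check{A}$. Then $\sigma_r(\check{T}) := \sigma(\check{T}) \setminus \sigma_{a.p.}(\check{T}) \subset \sigma(T)$, where $\sigma_{a.p.}(\check{T})$ is the approximate point spectrum of $\check{T}$.
   Context: $A$ is a unital commutative semi-simple Banach algebra with maximal ideal space $\mathfrak{M}_A$ and Shilov boundary $\partial A$. For $f\in A$, $\check f$ is the restriction of the Gelfand transform $\hat f$ to $\partial A$; $\check A$ is the closure of $\{\check f: f\in A\}$ in $C(\partial A)$ with sup norm. The automorphism $U$ induces a homeomorphism $\varphi$ of $\mathfrak{M}_A$ by $\widehat{Uf}(m)=\hat f(\varphi(m))$, with $\varphi(\partial A)=\partial A$. $T=wU$ means $Tf=w\cdot Uf$; $\check T$ is the operator on $\check A$ given by $(\check Tg)(t)=\check w(t)g(\varphi(t))$, $t\in\partial A$. *)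

(* Defs.v *)
From mathcomp Require Import all_boot all_order all_algebra.
From mathcomp Require Import all_classical all_reals all_analysis.
From mathcomp Require Import complex.
Set Implicit Arguments. Unset Strict Implicit. Unset Printing Implicit Defensive.
Import Order.TTheory GRing.Theory Num.Theory.
Import numFieldNormedType.Exports.
Local Open Scope ring_scope.
Local Open Scope classical_set_scope.

Record cbanach_alg (R : realType) (A : completeNormedModType R[i]) := CBanachAlg {
  bmul : A -> A -> A;
  bone : A;
  bmulA : forall x y z, bmul x (bmul y z) = bmul (bmul x y) z;
  bmulC : forall x y, bmul x y = bmul y x;
  bmulDl : forall x y z, bmul (x + y) z = bmul x z + bmul y z;
  bmulZl : forall (a : R[i]) x y, bmul (a *: x) y = a *: bmul x y;
  bmul1 : forall x, bmul bone x = x;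
  bone_neq0 : bone != 0;
  bnorm_mul : forall x y, `|bmul x y| <= `|x| * `|y|
}.

Declare Scope banach_scope.
Section Defs.
Variables (R : realType) (A : completeNormedModType R[i]) (B : cbanach_alg A).
Local Notation C := R[i].
Local Notation "x * y" := (bmul B x y) : banach_scope.
Local Notation "1" := (bone B) : banach_scope.
Delimit Scope banach_scope with B.

Definition is_ideal (I : set A) :=
  [/\ I 0, (forall x y, I x -> I y -> I (x + y)) &
      (forall a x, I x -> I (a * x)%B)].
Definition is_max_ideal (I : set A) :=
  [/\ is_ideal I, ~ I 1%B &
      forall J : set A, is_ideal J -> ~ J 1%B -> I `<=` J -> J = I].
Definition semisimple := forall x : A, (forall I, is_max_ideal I -> I x) -> x = 0.

Definition is_automorphism (U : A -> A) :=
  [/\ bijective U, (forall x y, U (x + y) = U x + U y),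
      (forall (a : C) x, U (a *: x) = a *: U x),
      (forall x y, U (x * y)%B = (U x * U y)%B) & U 1%B = 1%B].

Definition wcomp (w : A) (U : A -> A) : A -> A := fun x => (w * U x)%B.

Definition spectrum (T : A -> A) : set C := fun l =>
  ~ exists S : A -> A,
    [/\ (forall x y, S (x + y) = S x + S y),
        (forall (a : C) x, S (a *: x) = a *: S x),
        (exists c : C, forall x, `|S x| <= c * `|x|),
        (forall x, S (l *: x - T x) = x) &
        (forall x, l *: S x - T (S x) = x)].

(* maximal ideal space M_A, realised as the set of characters
   (nonzero multiplicative linear functionals) *)
Definition is_char (m : A -> C) :=
  [/\ (forall x y, m (x + y) = m x + m y),
      (forall (a : C) x, m (a *: x) = a * m x),
      (forall x y, m (x * y)%B = m x * m y) & m 1%B = 1].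

(* closed subsets of M_A for the Gelfand (weak-star) topology *)
Definition gelfand_closed (F : set (A -> C)) :=
  F `<=` is_char /\
  forall m, is_char m -> ~ F m ->
    exists (fs : seq A) (e : R), 0 < e /\
      forall m', is_char m' -> (forall f, f \in fs -> `|m' f - m f| < (e%:C)%C) -> ~ F m'.

Definition is_boundary (F : set (A -> C)) :=
  F `<=` is_char /\
  forall f : A, exists2 m, F m & forall m', is_char m' -> `|m' f| <= `|m f|.

(* Shilov boundary: the smallest closed boundary (intersection of all
   closed boundaries) *)
Definition shilov : set (A -> C) := fun m =>
  is_char m /\ forall F, gelfand_closed F -> is_boundary F -> F m.

(* check A: closure in C(dA) (sup norm) of the restrictions of Gelfand
   transforms.  Elements are represented by functions on M_A; only their
   values on the Shilov boundary matter. *)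
Definition checkA : set ((A -> C) -> C) := fun g =>
  forall e : R, 0 < e -> exists f : A, forall t, shilov t -> `|g t - t f| <= (e%:C)%C.

Definition eqdA (g h : (A -> C) -> C) := forall t, shilov t -> g t = h t.

Definition supnorm_eq1 (g : (A -> C) -> C) :=
  (forall t, shilov t -> `|g t| <= 1) /\
  (forall e : R, 0 < e -> exists2 t, shilov t & 1 - (e%:C)%C < `|g t|).

Definition checkT (w : A) (U : A -> A) (g : (A -> C) -> C) : (A -> C) -> C :=
  fun t => t w * g (t \o U).

Definition spectrum_check (T : ((A -> C) -> C) -> ((A -> C) -> C)) : set C :=
  fun l => ~ exists S : ((A -> C) -> C) -> ((A -> C) -> C),
    [/\ (forall g, checkA g -> checkA (S g)),
        (forall (a : C) g h, checkA g -> checkA h ->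
            eqdA (S (fun t => a * g t + h t)) (fun t => a * S g t + S h t)),
        (exists c : C, forall g (M : C), checkA g ->
            (forall t, shilov t -> `|g t| <= M) ->
            forall t, shilov t -> `|S g t| <= c * M),
        (forall g, checkA g -> eqdA (S (fun t => l * g t - T g t)) g) &
        (forall g, checkA g -> eqdA (fun t => l * S g t - T (S g) t) g)].

Definition ap_spectrum_check (T : ((A -> C) -> C) -> ((A -> C) -> C)) : set C :=
  fun l => exists g : nat -> ((A -> C) -> C),
    (forall n, checkA (g n) /\ supnorm_eq1 (g n)) /\
    forall e : R, 0 < e -> exists N, forall n, (N <= n)%N ->
      forall t, shilov t -> `|l * g n t - T (g n) t| <= (e%:C)%C.

End Defs.

(* Main.v *)
Require Import Defs.
From mathcomp Require Import all_boot all_order all_algebra.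
From mathcomp Require Import all_classical all_reals all_analysis.
From mathcomp Require Import complex.
From mathcomp Require Import ring lra.
Import Order.TTheory GRing.Theory Num.Theory.
Import numFieldNormedType.Exports.
Local Open Scope ring_scope.
Local Open Scope classical_set_scope.
Local Open Scope complex_scope.
Set Implicit Arguments. Unset Strict Implicit. Unset Printing Implicit Defensive.

Section Conv.
Variable R : realType.
Definition nz (z : R[i]) : R := complex.Re `|z|.
Lemma realE (z : R[i]) : 0 <= z -> z = (complex.Re z)%:C.
Proof. case: z => a b. rewrite lecE /= => /andP[/eqP -> _]. by []. Qed.
Lemma nzE (z : R[i]) : `|z| = (nz z)%:C.
Proof. exact/realE/normr_ge0. Qed.
Lemma nz_ge0 z : 0 <= nz z.
Proof. rewrite -lecR -nzE; exact: normr_ge0. Qed.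
Lemma nzD x y : nz (x + y) <= nz x + nz y.
Proof. rewrite -lecR rmorphD /= -!nzE; apply: ler_normD. Qed.
Lemma nzM x y : nz (x * y) = nz x * nz y.
Proof. apply: complexI. by rewrite rmorphM /= -!nzE normrM. Qed.
Lemma nzN x : nz (- x) = nz x.
Proof. by rewrite /nz normrN. Qed.
Lemma nzB x y : nz (x - y) = nz (y - x).
Proof. by rewrite -nzN opprB. Qed.
Lemma nzR (r : R) : nz (r%:C) = `|r|.
Proof. apply: complexI; rewrite -nzE. rewrite normc_def /= expr0n /= addr0 sqrtr_sqr. by []. Qed.
Lemma nz0 : nz 0 = 0.
Proof. by rewrite /nz normr0. Qed.
Lemma nz_eq0 z : nz z = 0 -> z = 0.
Proof. move=> h; apply/eqP; rewrite -normr_eq0 nzE h; apply/eqP; reflexivity. Qed.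

Lemma nzleC z r : (`|z| <= r%:C) = (nz z <= r).
Proof. by rewrite nzE lecR. Qed.
Lemma nzltC z r : (r%:C < `|z|) = (r < nz z).
Proof. by rewrite nzE ltcR. Qed.
Variable A : completeNormedModType R[i].
Definition na (x : A) : R := complex.Re `|x|.
Lemma naE (x : A) : `|x| = (na x)%:C.
Proof. exact/realE/normr_ge0. Qed.
Lemma na_ge0 x : 0 <= na x.
Proof. rewrite -lecR -naE; exact: normr_ge0. Qed.
Lemma naD x y : na (x + y) <= na x + na y.
Proof. rewrite -lecR rmorphD /= -!naE; apply: ler_normD. Qed.
Lemma naZ a x : na (a *: x) = nz a * na x.
Proof. apply: complexI. by rewrite rmorphM /= -naE -nzE -naE normrZ. Qed.
Lemma naN x : na (- x) = na x.
Proof. by rewrite /na normrN. Qed.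
Lemma na0 : na 0 = 0.
Proof. by rewrite /na normr0. Qed.
End Conv.

Section T.
Variable R : realType.
Lemma test (P : nat -> Prop) (Q : nat -> Prop) : (\forall n \near \oo, P n) -> (\forall n \near \oo, Q n) -> exists n, P n /\ Q n.
Proof. move=> [N1 _ h1] [N2 _ h2]. exists (maxn N1 N2); split; [apply: h1|apply: h2]; rewrite /= ?leq_maxl ?leq_maxr //. Qed.
Lemma test2 (P : nat -> Prop) N : (forall n, (N <= n)%N -> P n) -> \forall n \near \oo, P n.
Proof. move=> h. exists N => //. Qed.
Lemma test3 (P : nat -> Prop) : (\forall n \near \oo, P n) -> exists N, forall n, (N <= n)%N -> P n.
Proof. move=> [N _ h]. by exists N. Qed.
Lemma small0 (x : R) : (forall e, 0 < e -> x <= e) -> x <= 0.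
Proof. move=> h; rewrite leNgt; apply/negP => x0. have := h (x / 2). rewrite divr_gt0 // => /(_ isT). lra. Qed.
End T.

Section CauchyR.
Variable R : realType.
Lemma cauchyR (a e : nat -> R) : (forall n m, `|a n - a m| <= e n + e m) ->
  exists L, forall m, `|L - a m| <= e m.
Proof.
move=> h.
pose E := [set r | exists n, r = a n - e n].
have ub : forall m, ubound E (a m + e m).
  move=> m r [n ->]. have := h n m. rewrite ler_norml => /andP[_ h2]. lra.
have hs : has_sup E by split; [exists (a 0%N - e 0%N); exists 0%N | exists (a 0%N + e 0%N); apply: ub].
exists (sup E) => m; rewrite ler_norml; apply/andP; split.
  have : a m - e m <= sup E by apply: sup_upper_bound => //; exists m.
  lra.
have : sup E <= a m + e m by apply: ge_sup; [case: hs | apply: ub].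
lra.
Qed.

Lemma ReB (x y : R[i]) : complex.Re (x - y) = complex.Re x - complex.Re y.
Proof. by case: x y => ? ? [? ?]. Qed.
Lemma ImB (x y : R[i]) : complex.Im (x - y) = complex.Im x - complex.Im y.
Proof. by case: x y => ? ? [? ?]. Qed.
Lemma nz_sqrt (z : R[i]) : nz z = Num.sqrt (complex.Re z ^+ 2 + complex.Im z ^+ 2).
Proof. by apply: complexI; rewrite -nzE normc_def. Qed.
Lemma Re_le (z : R[i]) : `|complex.Re z| <= nz z.
Proof. rewrite nz_sqrt -sqrtr_sqr ler_sqrt ?addr_ge0 ?sqr_ge0 // lerDl sqr_ge0 //. Qed.
Lemma Im_le (z : R[i]) : `|complex.Im z| <= nz z.
Proof. rewrite nz_sqrt -sqrtr_sqr ler_sqrt ?addr_ge0 ?sqr_ge0 // lerDr sqr_ge0 //. Qed.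
Lemma nz_ReIm (a b : R) : nz (Complex a b) <= `|a| + `|b|.
Proof.
have -> : Complex a b = a%:C + (Complex 0 1) * b%:C.
  by apply/eqP; rewrite eq_complex /=; simpc.
apply: le_trans (nzD _ _) _. rewrite nzM !nzR.
have -> : nz ('i%C : R[i]) = 1.
  have := nz_sqrt ('i%C : R[i]). rewrite /= expr0n add0r expr1n sqrtr1. by [].
by rewrite mul1r.
Qed.

Lemma cauchyC (u : nat -> R[i]) (e : nat -> R) : (forall n m, nz (u n - u m) <= e n + e m) ->
  exists L, forall m, nz (L - u m) <= e m + e m.
Proof.
move=> h.
have hR : forall n m, `|complex.Re (u n) - complex.Re (u m)| <= e n + e m.
  move=> n m /=; rewrite -ReB; exact: le_trans (Re_le _) (h n m).
have hI : forall n m, `|complex.Im (u n) - complex.Im (u m)| <= e n + e m.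
  move=> n m /=; rewrite -ImB; exact: le_trans (Im_le _) (h n m).
have [Lr hr] := cauchyR hR.
have [Li hi] := cauchyR hI.
exists (Complex Lr Li) => m.
have := hr m; have := hi m; case: (u m) => a b /= h1 h2.
apply: le_trans (nz_ReIm _ _) _. exact: lerD.
Qed.
End CauchyR.

Section Alg.
Variables (R : realType) (A : completeNormedModType R[i]) (B : cbanach_alg A).
Local Notation "x ** y" := (bmul B x y) (at level 40).
Local Notation "1" := (bone B).

Lemma bmulNl x y : (- x) ** y = - (x ** y).
Proof. by rewrite -scaleN1r bmulZl scaleN1r. Qed.
Lemma bmul0l y : 0 ** y = 0.
Proof. have := bmulZl B 0 0 y. by rewrite !scale0r. Qed.
Lemma bmulBl x y z : (x - y) ** z = x ** z - y ** z.
Proof. by rewrite bmulDl bmulNl. Qed.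
Lemma bmulDr x y z : x ** (y + z) = x ** y + x ** z.
Proof. by rewrite bmulC bmulDl !(bmulC B x). Qed.
Lemma bmulZr a x y : x ** (a *: y) = a *: (x ** y).
Proof. by rewrite bmulC bmulZl bmulC. Qed.
Lemma bmulBr x y z : x ** (y - z) = x ** y - x ** z.
Proof. by rewrite !(bmulC B x) bmulBl. Qed.
Lemma bmul1r x : x ** 1 = x.
Proof. by rewrite bmulC bmul1. Qed.
Lemma na_mul x y : na (x ** y) <= na x * na y.
Proof. rewrite -lecR rmorphM /= -!naE; exact: bnorm_mul. Qed.

Section Char.
Variables (m : A -> R[i]) (hm : is_char B m).
Lemma char0 : m 0 = 0.
Proof. case: hm => mD _ _ _. by apply: (addrI (m 0)); rewrite -mD !addr0. Qed.
Lemma charN x : m (- x) = - m x.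
Proof. case: hm => _ mZ _ _. by rewrite -scaleN1r mZ mulN1r. Qed.
Lemma charB x y : m (x - y) = m x - m y.
Proof. case: hm => mD _ _ _. by rewrite mD charN. Qed.
Lemma charD x y : m (x + y) = m x + m y.
Proof. by case: hm. Qed.
Lemma charZ a x : m (a *: x) = a * m x.
Proof. by case: hm. Qed.
Lemma charM x y : m (x ** y) = m x * m y.
Proof. by case: hm. Qed.
Lemma char1 : m 1 = 1%R.
Proof. by case: hm. Qed.
End Char.

Section Neumann.
Variable g : A.
Hypothesis hg : na g < 1%R.
Let q := na g.
Let pw n := iter n (bmul B g) 1.
Let s n := \sum_(0 <= k < n) pw k.
Let q0 : 0 <= q. Proof. exact: na_ge0. Qed.
Let K := na 1 / (1%R - q).
Let K0 : 0 <= K. Proof. rewrite /K divr_ge0 ?na_ge0 // subr_ge0 ltW //. Qed.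

Let pw_bound n : na (pw n) <= q ^+ n * na 1.
Proof.
elim: n => [|n IH]; first by rewrite expr0 mul1r.
rewrite /pw iterS -/(pw n). apply: le_trans (na_mul _ _) _.
rewrite exprS -mulrA. exact: ler_wpM2l.
Qed.

Let tele (n : nat) : bmul B (bone B - g) (s n) = bone B - pw n.
Proof.
elim: n => [|n IH]; first by rewrite /s big_geq // bmulC bmul0l /pw /= subrr.
rewrite /s big_nat_recr //= -/(s n) bmulDr IH bmulBl bmul1.
by rewrite addrA subrK.
Qed.

Let tail n d : na (s (n + d)%N - s n) <= (q ^+ n - q ^+ (n + d)) * K.
Proof.
elim: d => [|d IH]; first by rewrite addn0 subrr na0 subrr mul0r.
rewrite addnS /s big_nat_recr //= -/(s (n + d)%N) -/(s n) addrAC.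
apply: le_trans (naD _ _) _.
have h := pw_bound (n + d).
have -> : (q ^+ n - q ^+ (n + d).+1) * K = (q ^+ n - q ^+ (n + d)) * K + q ^+ (n + d) * na 1.
  rewrite /K exprS. field. by rewrite subr_eq0 eq_sym lt_eqF.
exact: lerD.
Qed.

Let qn_small e : 0 < e -> exists N, forall n, (N <= n)%N -> q ^+ n < e.
Proof.
move=> e0.
have hq : `|q| < 1%R by rewrite ger0_norm.
have H := cvg_expr hq. move/cvgr_dist_lt: H => /(_ e e0) H.
have [N hN] := test3 H.
exists N => n /hN. by rewrite sub0r normrN ger0_norm // exprn_ge0.
Qed.

Lemma neumann : exists L, bmul B (bone B - g) L = bone B.
Proof.
have cau : cauchy (s @ \oo).
  apply: cauchy_exP => eps eps0.
  set e := complex.Re eps.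
  have eE : eps = e%:C := realE (ltW eps0).
  have e0 : 0 < e by rewrite -ltcR -eE.
  have [N hN] := qn_small (divr_gt0 e0 (ltr_wpDl K0 ltr01)).
  exists (s N); exists N => // n /= hn.
  rewrite -ball_normE /= distrC naE eE ltcR.
  have := tail N (n - N); rewrite subnKC // => ht.
  apply: le_lt_trans ht _.
  have := hN N (leqnn N). rewrite ltr_pdivlMr ?(ltr_wpDl K0 ltr01) // => h.
  have := mulr_ge0 (exprn_ge0 n q0) K0. have := exprn_ge0 N q0. nra.
have cv : cvg (s @ \oo) by apply/cauchy_cvgP.
exists (lim (s @ \oo)).
set L := lim _.
have HL : forall e, 0 < e -> exists N, forall n, (N <= n)%N -> na (L - s n) < e.
  move=> e e0. have e0' : 0 < e%:C by rewrite ltcR.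
  move/cvgr_dist_lt: cv => /(_ _ e0') H. have [N hN] := test3 H.
  exists N => n /hN. by rewrite naE ltcR.
set a := na (bone B - g).
have a0 : 0 <= a := na_ge0 _.
have b0 : 0 <= na (bone B) := na_ge0 _.
set D := bmul B (bone B - g) L - bone B.
have hD : na D <= 0.
  apply: small0 => e e0.
  have [N1 h1] := HL (e / (2 * (a + 1))) (divr_gt0 e0 (mulr_gt0 (ltr0Sn R 1) (ltr_wpDl a0 ltr01))).
  have [N2 h2] := qn_small (divr_gt0 e0 (mulr_gt0 (ltr0Sn R 1) (ltr_wpDl b0 ltr01))).
  have := h1 (maxn N1 N2) (leq_maxl _ _). have := h2 (maxn N1 N2) (leq_maxr _ _).
  set n := maxn N1 N2.
  have -> : D = bmul B (bone B - g) (L - s n) - pw n.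
    by rewrite /D bmulBr tele opprB addrA addrAC addrK.
  rewrite !ltr_pdivlMr ?(mulr_gt0 (ltr0Sn R 1) (ltr_wpDl a0 ltr01)) ?(mulr_gt0 (ltr0Sn R 1) (ltr_wpDl b0 ltr01)) // => hq hL.
  apply: le_trans (naD _ _) _. rewrite naN.
  have := na_mul (bone B - g) (L - s n). rewrite -/a => hm.
  have := pw_bound n => hp.
  have := na_ge0 (L - s n). have := exprn_ge0 n q0.
  have := mulr_ge0 a0 (na_ge0 (L - s n)). have := mulr_ge0 (exprn_ge0 n q0) b0.
  nra.
have D0 : na D = 0 by apply: le_anti; rewrite hD na_ge0.
apply/eqP; rewrite -subr_eq0 -/D -normr_eq0 naE D0. by rewrite rmorph0.
Qed.
End Neumann.

Lemma nz1 : nz (1%R : R[i]) = 1%R.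
Proof. by rewrite /nz normr1. Qed.

Lemma char_bound m f : is_char B m -> nz (m f) <= na f.
Proof.
move=> hm. rewrite leNgt; apply/negP => hlt.
set mu := m f.
have nzmu : 0 < nz mu := le_lt_trans (na_ge0 f) hlt.
have mu0 : mu != 0 by apply/eqP => h; move: nzmu; rewrite h nz0 ltxx.
have hinv : nz mu^-1 = (nz mu)^-1.
  apply: (mulIf (lt0r_neq0 nzmu)); rewrite -nzM mulVf // mulVf ?nz1 //. exact: lt0r_neq0.
set g := mu^-1 *: f.
have hg : na g < 1%R.
  rewrite /g naZ hinv mulrC ltr_pdivrMr // mul1r. exact: hlt.
have mg : m g = 1%R by rewrite /g (charZ hm) mulVf.
have [L hL] := neumann hg.
have := congr1 m hL. rewrite (charM hm) (charB hm) (char1 hm) mg subrr mul0r => /eqP.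
by rewrite eq_sym oner_eq0.
Qed.
End Alg.

Section Shilov.
Variables (R : realType) (A : completeNormedModType R[i]) (B : cbanach_alg A).

Lemma char_comp (U : A -> A) m :
  (forall x y, U (x + y) = U x + U y) -> (forall a x, U (a *: x) = a *: U x) ->
  (forall x y, U (bmul B x y) = bmul B (U x) (U y)) -> U (bone B) = bone B ->
  is_char B m -> is_char B (m \o U).
Proof.
move=> UD UZ UM U1 [mD mZ mM m1]; split => /=.
- by move=> x y; rewrite UD mD.
- by move=> a x; rewrite UZ mZ.
- by move=> x y; rewrite UM mM.
- by rewrite U1 m1.
Qed.

Lemma shilov_comp U t : is_automorphism B U -> shilov B t -> shilov B (t \o U).
Proof.
move=> [[V UV VU] UD UZ UM U1] [tc tF].
have VD : forall x y, V (x + y) = V x + V y.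
  by move=> x y; rewrite -{1}(VU x) -{1}(VU y) -UD UV.
have VZ : forall a x, V (a *: x) = a *: V x.
  by move=> a x; rewrite -{1}(VU x) -UZ UV.
have VM : forall x y, V (bmul B x y) = bmul B (V x) (V y).
  by move=> x y; rewrite -{1}(VU x) -{1}(VU y) -UM UV.
have V1 : V (bone B) = bone B by rewrite -{1}U1 UV.
have cU := char_comp UD UZ UM U1.
have cV := char_comp VD VZ VM V1.
split; first exact: cU.
move=> F [Fc Fcl] [_ Fb].
pose F' := fun m => is_char B m /\ F (m \o U).
suff : F' t by case.
apply: tF.
- split; first by move=> m [].
  move=> m mc nF'.
  have nF : ~ F (m \o U) by move=> h; apply: nF'.
  have [fs [e [e0 he]]] := Fcl _ (cU _ mc) nF.
  exists (map U fs), e; split => // m' m'c hm' [_ Fm'].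
  apply: (he (m' \o U) (cU _ m'c)) => // f ffs /=.
  by apply: hm'; apply: map_f.
- split; first by move=> m [].
  move=> f.
  have [m0 Fm0 hm0] := Fb (V f).
  have m0c := Fc _ Fm0.
  exists (m0 \o V).
    split; first exact: cV.
    suff -> : (m0 \o V) \o U = m0 by [].
    by apply: funext => x /=; rewrite UV.
  move=> m' m'c /=.
  have := hm0 _ (cU _ m'c). by rewrite /= VU.
Qed.
End Shilov.

Section Main.
Variables (R : realType) (A : completeNormedModType R[i]) (B : cbanach_alg A).
Variables (U : A -> A) (w : A) (l : R[i]).
Hypothesis hU : is_automorphism B U.
Hypothesis nap : ~ ap_spectrum_check B (checkT w U) l.
Let sh := shilov B.
Let LT x := l *: x - wcomp B w U x.

Let UD : forall x y, U (x + y) = U x + U y. Proof. by case: hU. Qed.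
Let UZ : forall a x, U (a *: x) = a *: U x. Proof. by case: hU. Qed.

Let LTZ a x : LT (a *: x) = a *: LT x.
Proof. by rewrite /LT /wcomp UZ bmulZr scalerBr !scalerA mulrC. Qed.
Let LTB x y : LT (x - y) = LT x - LT y.
Proof.
have UN : forall z, U (- z) = - U z by move=> z; rewrite -scaleN1r UZ scaleN1r.
rewrite /LT /wcomp UD UN bmulDr.
have BN : bmul B w (- U y) = - bmul B w (U y) by rewrite bmulC bmulNl bmulC.
rewrite BN scalerBr opprD opprK opprB addrACA; congr (_ + _); by rewrite addrC.
Qed.
Let LTD x y : LT (x + y) = LT x + LT y.
Proof.
have LTN : LT (- y) = - LT y by rewrite -scaleN1r LTZ scaleN1r.
by rewrite -{1}(opprK y) LTB LTN opprK.
Qed.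

Let sh_char t : sh t -> is_char B t. Proof. by case. Qed.

Let F3 t x : is_char B t -> l * t x - checkT w U (fun s => s x) t = t (LT x).
Proof. move=> tc. by rewrite /checkT /LT /wcomp /= (charB tc) (charZ tc) (charM tc). Qed.

Lemma bounded_below : exists c, 0 < c /\ forall x M, (forall s, sh s -> nz (s (LT x)) <= M) ->
  forall t, sh t -> nz (t x) <= c * M.
Proof.
apply: contrapT => nG.
have step : forall n : nat, exists xM : A * R, (forall s, sh s -> nz (s (LT xM.1)) <= xM.2) /\
    exists2 t, sh t & n.+1%:R * xM.2 < nz (t xM.1).
  move=> n; apply: contrapT => hn; apply: nG; exists n.+1%:R; split => // x M hM t ht.
  rewrite leNgt; apply/negP => hlt; apply: hn; exists (x, M); split => //; by exists t.
have [XM HXM] := choice step.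
pose x n := (XM n).1. pose M n := (XM n).2.
pose E n := [set r | exists2 t, sh t & r = nz (t (x n))].
pose sig n := sup (E n).
have hsup : forall n, has_sup (E n).
  move=> n; have [_ [t ht _]] := HXM n; split; first by exists (nz (t (x n))); exists t.
  exists (na (x n)) => r [t' ht' ->]. exact: char_bound (sh_char ht').
have sig_ge : forall n t, sh t -> nz (t (x n)) <= sig n.
  by move=> n t ht; apply: sup_upper_bound (hsup n) _ _; exists t.
have hM : forall n, n.+1%:R * M n < sig n.
  move=> n; have [_ [t ht h]] := HXM n. exact: lt_le_trans h (sig_ge n t ht).
have M0 : forall n, 0 <= M n.
  move=> n; have [h [t ht _]] := HXM n. exact: le_trans (nz_ge0 _) (h t ht).
have sig0 : forall n, 0 < sig n.
  move=> n; apply: le_lt_trans (hM n). exact: mulr_ge0 (ler0n _ _) (M0 n).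
apply: nap.
exists (fun n t => t (((sig n)^-1)%:C *: x n)).
split.
  move=> n; split.
    move=> e e0; exists (((sig n)^-1)%:C *: x n) => t _; rewrite subrr normr0 lecR ltW //.
  split.
    move=> t ht.
    have sn0 : 0 <= (sig n)^-1 by rewrite invr_ge0 ltW.
    rewrite (_ : (1 : R[i]) = (1:R)%:C) // nzleC (charZ (sh_char ht)) nzM nzR ger0_norm //.
    by rewrite mulrC ler_pdivrMr // mul1r sig_ge.
  move=> e e0.
  have [r [t ht ->] hr] := sup_adherent (mulr_gt0 e0 (sig0 n)) (hsup n).
  exists t => //.
  have sn0 : 0 <= (sig n)^-1 by rewrite invr_ge0 ltW.
  rewrite (_ : 1 - e%:C = (1 - e)%:C); last by rewrite rmorphB rmorph1.
  rewrite nzltC (charZ (sh_char ht)) nzM nzR ger0_norm // mulrC ltr_pdivlMr //.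
  move: hr; rewrite -/(sig n). nra.
move=> e e0; exists (Num.truncn e^-1) => n hn t ht.
have sn0 : 0 <= (sig n)^-1 by rewrite invr_ge0 ltW.
rewrite F3; last exact: sh_char ht.
rewrite LTZ nzleC (charZ (sh_char ht)) nzM nzR ger0_norm // mulrC ler_pdivrMr //.
have [hv _] := HXM n. have := hv t ht. rewrite -/(x n) -/(M n) => hv'.
have hk : e^-1 < n.+1%:R.
  apply: lt_le_trans (truncnS_gt e^-1) _. by rewrite ler_nat ltnS.
have ee : e * e^-1 = 1 by rewrite mulfV // gt_eqF.
have ek : 1 < e * n.+1%:R by nra.
have := hM n. have := M0 n. nra.
Qed.

Lemma lim_le (a b K : R) : 0 <= K -> (forall n : nat, a <= b + K * (n.+1%:R)^-1) -> a <= b.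
Proof.
move=> K0 h. rewrite -subr_le0. apply: small0 => e e0.
have hk := truncnS_gt (K / e). set n := Num.truncn _ in hk.
have := h n. rewrite ltr_pdivrMr // in hk.
have n0 : 0 < (n.+1%:R : R) by rewrite ltr0Sn.
have : K * (n.+1%:R)^-1 <= e.
  rewrite ler_pdivrMr //. rewrite mulrC. exact: ltW.
move=> h1 h2. rewrite lerBlDl; apply: (le_trans h2); rewrite lerD2l //.
Qed.

Lemma small_eq (z : R[i]) (K : R) : 0 <= K -> (forall d, 0 < d -> nz z <= K * d) -> z = 0.
Proof.
move=> K0 h; apply: nz_eq0; apply: le_anti; rewrite nz_ge0 andbT.
apply: small0 => e e0.
have K1 : 0 < K + 1 by lra.
have := h (e / (K + 1)) (divr_gt0 e0 K1).
have : K * (e / (K + 1)) <= e.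
  rewrite mulrA ler_pdivrMr // [K * e]mulrC ler_pM2l // lerDl ler01 //.
move=> h1 h2. exact: le_trans h2 h1.
Qed.

Section Inv.
Variable S0 : A -> A.
Hypothesis S0r : forall x, LT (S0 x) = x.
Variable c : R.
Hypothesis c0 : 0 < c.
Hypothesis hc : forall x M, (forall s, sh s -> nz (s (LT x)) <= M) ->
  forall t, sh t -> nz (t x) <= c * M.

Let good (g : (A -> R[i]) -> R[i]) v (t : A -> R[i]) := forall x e, 0 <= e ->
  (forall s, sh s -> nz (g s - s (LT x)) <= e) -> nz (v - t x) <= c * e.

Let checkA_nz g : checkA B g <-> forall e, 0 < e -> exists f : A, forall t, sh t -> nz (g t - t f) <= e.
Proof. by split => h e e0; have [f hf] := h e e0; exists f => t ht; [rewrite -nzleC | rewrite nzleC]; apply: hf. Qed.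

Let key_ex g : checkA B g -> forall t, sh t -> exists v, good g v t.
Proof.
move=> /checkA_nz hg t ht.
have : forall n : nat, exists f : A, forall s, sh s -> nz (g s - s f) <= (n.+1%:R)^-1.
  by move=> n; apply: hg; rewrite invr_gt0 ltr0Sn.
move=> /choice [F hF].
pose d (n : nat) : R := (n.+1%:R)^-1.
have tc := sh_char ht.
have hu : forall n m, nz (t (S0 (F n)) - t (S0 (F m))) <= c * d n + c * d m.
  move=> n m. rewrite -(charB tc) -mulrDr. apply: hc => // s hs.
  rewrite LTB !S0r (charB (sh_char hs)).
  rewrite -(subrKA (g s)). apply: le_trans (nzD _ _) _.
  apply: lerD; [rewrite nzB; exact: hF | exact: hF].
have [L hL] := cauchyC hu.
exists L => x e e0 hx.
apply: (@lim_le _ _ (c * 3)); first by rewrite mulr_ge0 // ltW.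
move=> n.
rewrite -(subrKA (t (S0 (F n)))). apply: le_trans (nzD _ _) _.
have h1 := hL n.
have h2 : nz (t (S0 (F n)) - t x) <= c * (d n + e).
  rewrite -(charB tc). apply: hc => // s hs.
  rewrite LTB S0r (charB (sh_char hs)).
  rewrite -(subrKA (g s)). apply: le_trans (nzD _ _) _.
  apply: lerD; [rewrite nzB; exact: hF | exact: hx].
rewrite -/(d n). move: h1 h2. rewrite /d => h1 h2.
apply: le_trans (lerD h1 h2) _.
have E : c / n.+1%:R + c / n.+1%:R + c * (n.+1%:R^-1 + e) = c * e + c * 3 / n.+1%:R by ring.
by rewrite E.
Qed.

Let Kdiv (K e : R) : 0 <= K -> 0 < e -> K * (e / (K + 1)) <= e.
Proof.
move=> K0 e0. have K1 : 0 < K + 1 by lra.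
rewrite mulrA ler_pdivrMr // [K * e]mulrC ler_pM2l // lerDl ler01 //.
Qed.

Let checkA_of G (K : R) : 0 <= K ->
  (forall d, 0 < d -> exists x, forall s, sh s -> nz (G s - s x) <= K * d) -> checkA B G.
Proof.
move=> K0 h; apply/checkA_nz => e e0.
have K1 : 0 < K + 1 by lra.
have [x hx] := h (e / (K + 1)) (divr_gt0 e0 K1).
exists x => s hs. exact: le_trans (hx s hs) (Kdiv K0 e0).
Qed.

Let eq_small (z1 z2 : R[i]) (K : R) : 0 <= K -> (forall d, 0 < d -> nz (z1 - z2) <= K * d) -> z1 = z2.
Proof. by move=> K0 h; apply/eqP; rewrite -subr_eq0; apply/eqP; apply: (small_eq K0). Qed.

Lemma no_inverse : spectrum_check B (checkT w U) l -> False.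
Proof.
move=> hsp; apply: hsp.
have : forall g, exists Sg : (A -> R[i]) -> R[i], checkA B g -> forall t, sh t -> good g (Sg t) t.
  move=> g; case: (pselect (checkA B g)) => hg; last by exists (fun _ => 0).
  have : forall t, exists v, sh t -> good g v t.
    move=> t; case: (pselect (sh t)) => ht; last by exists 0.
    by have [v hv] := key_ex hg ht; exists v.
  by move=> /choice [Sg hSg]; exists Sg => _ t ht; apply: hSg.
move=> /choice [S hS].
have c0' : 0 <= c := ltW c0.
have LT0 : LT 0 = 0 by have := LTB 0 0; rewrite !subrr.
exists S; split.
- move=> g hg. apply/checkA_nz => e e0.
  have [p hp] := (checkA_nz g).1 hg (e / c) (divr_gt0 e0 c0).
  exists (S0 p) => t ht.
  have := hS g hg t ht (S0 p) (e / c) (ltW (divr_gt0 e0 c0)).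
  rewrite [c * _]mulrC divfK ?gt_eqF //; apply => s hs; rewrite S0r; exact: hp.
- move=> a g h hg hh t ht.
  set G := fun t => a * g t + h t.
  have hG : forall d, 0 < d -> exists p q, (forall s, sh s -> nz (g s - s p) <= d) /\
      (forall s, sh s -> nz (h s - s q) <= d).
    move=> d d0.
    have [p hp] := (checkA_nz g).1 hg d d0. have [q hq] := (checkA_nz h).1 hh d d0.
    by exists p, q.
  have apx : forall p q d, (forall s, sh s -> nz (g s - s p) <= d) ->
      (forall s, sh s -> nz (h s - s q) <= d) ->
      forall s, sh s -> nz (G s - s (a *: p + q)) <= (nz a + 1) * d.
    move=> p q d hp hq s hs.
    rewrite (charD (sh_char hs)) (charZ (sh_char hs)) /G.
    have -> : a * g s + h s - (a * s p + s q) = a * (g s - s p) + (h s - s q) by ring.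
    apply: le_trans (nzD _ _) _. rewrite nzM mulrDl mul1r.
    apply: lerD; [apply: ler_wpM2l; [exact: nz_ge0 | exact: hp] | exact: hq].
  have nza := nz_ge0 a.
  have hGc : checkA B G.
    apply: (checkA_of (K := nz a + 1)); first by lra.
    move=> d d0. have [p [q [hp hq]]] := hG d d0.
    exists (a *: p + q). exact: apx.
  apply: (eq_small (K := c * (nz a + 1) + nz a * c + c)).
    by rewrite !addr_ge0 // ?mulr_ge0 // addr_ge0.
  move=> d d0. have [p [q [hp hq]]] := hG d d0.
  have h1 := hS G hGc t ht (a *: S0 p + S0 q) ((nz a + 1) * d) (mulr_ge0 (addr_ge0 nza ler01) (ltW d0)).
  rewrite LTD LTZ !S0r in h1. have {}h1 := h1 (apx p q d hp hq).
  have h2 := hS g hg t ht (S0 p) d (ltW d0). rewrite S0r in h2. have {}h2 := h2 hp.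
  have h3 := hS h hh t ht (S0 q) d (ltW d0). rewrite S0r in h3. have {}h3 := h3 hq.
  rewrite (charD (sh_char ht)) (charZ (sh_char ht)) in h1.
  have -> : S G t - (a * S g t + S h t) =
    (S G t - (a * t (S0 p) + t (S0 q))) - a * (S g t - t (S0 p)) - (S h t - t (S0 q)) by ring.
  apply: le_trans (nzD _ _) _. rewrite nzN.
  apply: le_trans (lerD (nzD _ _) (lexx _)) _. rewrite nzN nzM.
  have := ler_wpM2l nza h2.
  move: h1 h3 => h1 h3 h2'.
  have E : (c * (nz a + 1) + nz a * c + c) * d = c * ((nz a + 1) * d) + nz a * (c * d) + c * d by ring.
  rewrite E. apply: lerD; [apply: lerD|]; by [].
- exists c%:C => g M hg hM t ht.
  have M0 : 0 <= M := le_trans (normr_ge0 _) (hM t ht).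
  have ME := realE M0. set m := complex.Re M in ME.
  have m0 : 0 <= m by rewrite -lecR -ME.
  have := hS g hg t ht 0 m m0.
  rewrite (char0 (sh_char ht)) subr0 LT0 => h.
  rewrite ME -rmorphM nzleC. apply: h => s hs.
  rewrite (char0 (sh_char hs)) subr0 -nzleC -ME. exact: hM.
- move=> g hg t ht.
  set K := fun t => l * g t - checkT w U g t.
  have nl := nz_ge0 l. have nw := na_ge0 w.
  have apx : forall p d, (forall s, sh s -> nz (g s - s p) <= d) ->
      forall s, sh s -> nz (K s - s (LT p)) <= (nz l + na w) * d.
    move=> p d hp s hs.
    have sc := sh_char hs.
    have hsU : sh (s \o U) := shilov_comp hU hs.
    rewrite /K /checkT /LT /wcomp (charB sc) (charZ sc) (charM sc).
    have -> : l * g s - s w * g (s \o U) - (l * s p - s w * s (U p)) =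
      l * (g s - s p) - s w * (g (s \o U) - (s \o U) p) by rewrite /=; ring.
    apply: le_trans (nzD _ _) _. rewrite nzN !nzM mulrDl.
    apply: lerD; first by apply: ler_wpM2l => //; exact: hp.
    apply: ler_pM; [exact: nz_ge0 | exact: nz_ge0 | exact: char_bound sc | exact: hp].
  have hK : checkA B K.
    apply: (checkA_of (K := nz l + na w)); first by lra.
    move=> d d0. have [p hp] := (checkA_nz g).1 hg d d0.
    exists (LT p). exact: apx.
  apply: (eq_small (K := c * (nz l + na w) + 1)).
    by rewrite addr_ge0 // mulr_ge0 // addr_ge0.
  move=> d d0. have [p hp] := (checkA_nz g).1 hg d d0.
  have h1 := hS K hK t ht p ((nz l + na w) * d) (mulr_ge0 (addr_ge0 nl nw) (ltW d0)) (apx p d hp).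
  have h2 := hp t ht. rewrite nzB in h2.
  rewrite -(subrKA (t p)). apply: le_trans (nzD _ _) _.
  have E : (c * (nz l + na w) + 1) * d = c * ((nz l + na w) * d) + d by ring.
  rewrite E. exact: lerD.
- move=> g hg t ht.
  have nl := nz_ge0 l. have nw := na_ge0 w.
  have tc := sh_char ht.
  have htU : sh (t \o U) := shilov_comp hU ht.
  apply: (eq_small (K := nz l * c + na w * c + 1)).
    by rewrite !addr_ge0 // mulr_ge0.
  move=> d d0. have [p hp] := (checkA_nz g).1 hg d d0.
  have hp' : forall s, sh s -> nz (g s - s (LT (S0 p))) <= d by move=> s hs; rewrite S0r; exact: hp.
  have h1 := hS g hg t ht (S0 p) d (ltW d0) hp'.
  have h2 := hS g hg (t \o U) htU (S0 p) d (ltW d0) hp'.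
  have h3 := hp t ht. rewrite nzB in h3.
  have id := F3 (S0 p) tc. rewrite S0r /checkT /= in id.
  rewrite /checkT /=.
  have -> : l * S g t - t w * S g (t \o U) - g t =
     l * (S g t - t (S0 p)) - t w * (S g (t \o U) - t (U (S0 p))) +
     ((l * t (S0 p) - t w * t (U (S0 p))) - g t) by ring.
  rewrite id.
  apply: le_trans (nzD _ _) _. apply: le_trans (lerD (nzD _ _) (lexx _)) _.
  rewrite nzN !nzM.
  have E : (nz l * c + na w * c + 1) * d = nz l * (c * d) + na w * (c * d) + d by ring.
  rewrite E. apply: lerD => //. apply: lerD; first exact: ler_wpM2l.
  apply: ler_pM; [exact: nz_ge0 | exact: nz_ge0 | exact: char_bound tc | exact: h2].
Qed.
End Inv.
End Main.

Theorem proposition2 (R : realType) (A : completeNormedModType R[i])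
  (B : cbanach_alg A) (U : A -> A) (w : A) :
  semisimple B -> is_automorphism B U ->
  spectrum_check B (checkT w U) `\` ap_spectrum_check B (checkT w U)
    `<=` spectrum (wcomp B w U).
Proof.
move=> _ hU l [hsp hnap] [S0 [_ _ _ _ S0r]].
have [c [c0 hc]] := bounded_below hU hnap.
exact: (no_inverse hU S0r c0 hc hsp).
Qed.
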